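(* Let $\mathbf{T}\in\mathbb{R}^{n\ell\times n\ell}$ be symmetric positive definite and suppose $\mathbf{T}=\mathbf{I}_\ell\otimes\mathbf{T}_0+\sum_{k=1}^p\mathbf{E}_k\otimes\mathbf{T}_k$ with $\mathbf{T}_0\in\mathbb{R}^{n\times n}$ symmetric positive definite, $\mathbf{T}_k\in\mathbb{R}^{n\times n}$, and $\mathbf{E}_k\in\mathbb{R}^{\ell\times\ell}$ as in the context. Let $\mathbf{T}_0=\mathbf{L}\mathbf{L}^\top$ be its Cholesky factorization, set $\mathbf{A}_k=\mathbf{L}^{-1}\mathbf{T}_k\mathbf{L}^{-\top}$ and $\mathbf{A}=\sum_{k=1}^p\mathbf{E}_k\otimes\mathbf{A}_k$. Let $\mathcal{X}\in\mathbb{R}^{n\times p\times n}$ be the tensor with $\mathcal{X}_{i,k,j}=(\mathbf{A}_k)_{ij}$, let $\mathbf{U}\in\mathbb{R}^{n\times r}$ have orthonormal columns, and define $\mathcal{G}=\mathcal{X}\times_1\mathbf{U}^\top\times_3\mathbf{U}^\top$ and $\mathcal{T}=\mathcal{G}\times_1\mathbf{U}\times_3\mathbf{U}$. Then the matrix \[\widehat{\mathbf{T}}=(\mathbf{I}_\ell\otimes\mathbf{L})\big(\mathbf{I}+\mathcal{M}_{\mathcal{E}}[\mathcal{T}]\big)(\mathbf{I}_\ell\otimes\mathbf{L}^\top)\] is symmetric positive definite.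
   Context: The matrices $\mathbf{E}_1,\dots,\mathbf{E}_p\in\mathbb{R}^{\ell\times\ell}$ are position matrices: $\mathbf{E}_k$ has entries in $\{0,1/\sqrt{\eta_k}\}$ where $\eta_k\ge1$ is the number of its nonzero entries, and the supports of distinct $\mathbf{E}_k$ are disjoint. For a tensor $\mathcal{Y}\in\mathbb{R}^{n\times p\times n}$, $\mathrm{sq}(\mathcal{Y}_{:,k,:})$ is the $n\times n$ matrix with entries $\mathcal{Y}_{i,k,j}$ and $\mathcal{M}_{\mathcal{E}}[\mathcal{Y}]=\sum_{k=1}^p\mathbf{E}_k\otimes\mathrm{sq}(\mathcal{Y}_{:,k,:})$. The mode-$i$ product $\mathcal{Y}\times_i\mathbf{M}$ multiplies every mode-$i$ fiber of $\mathcal{Y}$ by $\mathbf{M}$, i.e. $(\mathcal{Y}\times_1\mathbf{M})_{a,k,j}=\sum_i\mathbf{M}_{ai}\mathcal{Y}_{i,k,j}$ and $(\mathcal{Y}\times_3\mathbf{M})_{i,k,b}=\sum_j\mathbf{M}_{bj}\mathcal{Y}_{i,k,j}$. The Kronecker product $\mathbf{B}\otimes\mathbf{C}$ has $(i,j)$ block $b_{ij}\mathbf{C}$; $\mathbf{L}^{-\top}=(\mathbf{L}^{-1})^\top$. *)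

(* Defs.v *)
From HB Require Import structures.
From mathcomp Require Import all_boot all_order all_algebra.
From mathcomp Require Import reals.
From mathcomp Require Export mxtens.
Set Implicit Arguments. Unset Strict Implicit. Unset Printing Implicit Defensive.
Import Order.TTheory GRing.Theory Num.Theory.
Local Open Scope ring_scope.

(* Kronecker product: A *t B (mathcomp real_closed mxtens), block (i,j) = A i j * B. *)

Definition spd {R : realType} {N : nat} (M : 'M[R]_N) : Prop :=
  M^T = M /\ forall x : 'cV[R]_N, x != 0 -> 0 < (x^T *m M *m x) 0 0.

Definition position_matrices {R : realType} {l p : nat}
  (E : 'I_p -> 'M[R]_l) (eta : 'I_p -> nat) : Prop :=
  [/\ forall k, (1 <= eta k)%N,
      forall k, #|[set ab : 'I_l * 'I_l | E k ab.1 ab.2 != 0]| = eta k,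
      forall k a b, E k a b = 0 \/ E k a b = 1 / Num.sqrt ((eta k)%:R) &
      forall k k' a b, k != k' -> E k a b != 0 -> E k' a b = 0].

Definition cholesky {R : realType} {n : nat} (T0 L : 'M[R]_n) : Prop :=
  [/\ is_trig_mx L, forall i, 0 < L i i & T0 = L *m L^T].

Definition tensor3 (R : Type) (n p m : nat) := 'I_n -> 'I_p -> 'I_m -> R.

Definition mode1 {R : realType} {n p m a : nat}
  (Y : tensor3 R n p m) (M : 'M[R]_(a, n)) : tensor3 R a p m :=
  fun a0 k j => \sum_(i < n) M a0 i * Y i k j.

Definition mode3 {R : realType} {n p m b : nat}
  (Y : tensor3 R n p m) (M : 'M[R]_(b, m)) : tensor3 R n p b :=
  fun i k b0 => \sum_(j < m) M b0 j * Y i k j.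

Definition sq {R : realType} {n p m : nat} (Y : tensor3 R n p m) (k : 'I_p)
  : 'M[R]_(n, m) := \matrix_(i, j) Y i k j.

Definition ME {R : realType} {l n p : nat} (E : 'I_p -> 'M[R]_l)
  (Y : tensor3 R n p n) : 'M[R]_(l * n) :=
  \sum_(k < p) (E k *t sq Y k).

(* Main.v *)
Require Import Defs.
From HB Require Import structures.
From mathcomp Require Import all_boot all_order all_algebra.
From mathcomp Require Import reals mxtens.
From mathcomp Require Import lra.
Import Order.TTheory GRing.Theory Num.Theory.
Local Open Scope ring_scope.

Section Aux.
Variable R : realType.

Definition qf {N} (M : 'M[R]_N) (x : 'cV[R]_N) := (x^T *m M *m x) 0 0.

Lemma qfD N (M M' : 'M[R]_N) x : qf (M + M') x = qf M x + qf M' x.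
Proof. by rewrite /qf mulmxDr mulmxDl mxE. Qed.

Lemma qfK N (K M : 'M[R]_N) x : qf (K *m M *m K^T) x = qf M (K^T *m x).
Proof. by rewrite /qf trmx_mul trmxK !mulmxA. Qed.

Lemma qfB N (B : 'M[R]_N) x : qf 1%:M (B *m x) = qf (B^T *m B) x.
Proof. by rewrite /qf trmx_mul mulmx1 !mulmxA. Qed.

Lemma qf1_sum N (x : 'cV[R]_N) : qf 1%:M x = \sum_i x i 0 ^+ 2.
Proof.
rewrite /qf mulmx1 mxE; apply: eq_bigr => i _; by rewrite mxE expr2.
Qed.

Lemma qf1_ge0 N (x : 'cV[R]_N) : 0 <= qf 1%:M x.
Proof. by rewrite qf1_sum; apply: sumr_ge0 => i _; apply: sqr_ge0. Qed.

Lemma qf1_gt0 N (x : 'cV[R]_N) : x != 0 -> 0 < qf 1%:M x.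
Proof.
move=> nx; rewrite lt_neqAle qf1_ge0 andbT eq_sym; apply/negP => /eqP H.
apply: (negP nx); apply/eqP/matrixP => i j; rewrite [j]ord1 mxE.
move: H; rewrite qf1_sum => /psumr_eq0P H.
have := H (fun k _ => sqr_ge0 (x k 0)) i isT; move/eqP; rewrite sqrf_eq0 => /eqP ->; by [].
Qed.

Lemma qf0 N (M : 'M[R]_N) : qf M 0 = 0.
Proof. by rewrite /qf mulmx0 mxE. Qed.

Lemma core N (K M P : 'M[R]_N) :
  K \in unitmx -> M^T = M ->
  (forall y, y != 0 -> 0 < qf (1%:M + M) y) ->
  P^T = P -> P *m P = P ->
  spd (K *m (1%:M + P *m M *m P) *m K^T).
Proof.
move=> uK HM Hpos HP HPP; split.
  rewrite !trmx_mul trmxK raddfD /= trmx1 !trmx_mul HP HM !mulmxA; done.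
move=> x nx; rewrite -/(qf _ x) qfK.
set z := K^T *m x.
have nz : z != 0.
  apply/negP => /eqP z0; apply: (negP nx); apply/eqP.
  have : invmx K^T *m z = x by rewrite /z mulKmx // unitmx_tr.
  by rewrite z0 mulmx0 => <-.
rewrite qfD.
have -> : qf (P *m M *m P) z = qf M (P *m z).
  by rewrite /qf (trmx_mul P z) HP !mulmxA.
have Hz : qf 1%:M (P *m z) <= qf 1%:M z.
  have -> : qf 1%:M z = qf 1%:M (P *m z) + qf 1%:M ((1%:M - P) *m z).
    rewrite (qfB _ P) (qfB _ (1%:M - P)) HP.
    have -> : (1%:M - P)^T *m (1%:M - P) = 1%:M - P.
      have -> : (1%:M - P)^T = 1%:M - P by rewrite raddfB /= trmx1 HP.
      by rewrite mulmxBl !mulmxBr !mul1mx !mulmx1 HPP subrr subr0.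
    by rewrite HPP -qfD addrC subrK.
  by rewrite lerDl qf1_ge0.
have [e0|ne0] := eqVneq (P *m z) 0.
  by rewrite e0 qf0 addr0 qf1_gt0.
have := Hpos _ ne0; rewrite qfD => h; lra.
Qed.

Lemma sq_mode1 n p m a (Y : tensor3 R n p m) (M : 'M[R]_(a, n)) k :
  sq (mode1 Y M) k = M *m sq Y k.
Proof. apply/matrixP => i j; rewrite !mxE; apply: eq_bigr => t _; by rewrite !mxE. Qed.

Lemma sq_mode3 n p m b (Y : tensor3 R n p m) (M : 'M[R]_(b, m)) k :
  sq (mode3 Y M) k = sq Y k *m M^T.
Proof. apply/matrixP => i j; rewrite !mxE; apply: eq_bigr => t _; by rewrite !mxE mulrC. Qed.

End Aux.

Theorem theorem5p2 (R : realType) (n l p r : nat)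
  (E : 'I_p -> 'M[R]_l) (eta : 'I_p -> nat)
  (T : 'M[R]_(l * n)) (T0 : 'M[R]_n) (Tk : 'I_p -> 'M[R]_n)
  (L : 'M[R]_n) (U : 'M[R]_(n, r)) :
  position_matrices E eta ->
  spd T ->
  T = (1%:M : 'M[R]_l) *t T0 + \sum_(k < p) (E k *t Tk k) ->
  spd T0 ->
  cholesky T0 L ->
  U^T *m U = 1%:M ->
  let A_ := fun k => invmx L *m Tk k *m (invmx L)^T in
  let X : tensor3 R n p n := fun i k j => A_ k i j in
  let G := mode3 (mode1 X U^T) U^T in
  let TT := mode3 (mode1 G U) U in
  spd (((1%:M : 'M[R]_l) *t L) *m (1%:M + ME E TT) *m ((1%:M : 'M[R]_l) *t L^T)).
Proof.
move=> _ [Tsym Tpos] HT _ [trL diagL HT0] HU A_ X G TT.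
have [ln0|ln0] := eqVneq (l * n)%N 0%N.
  have triv : forall (M : 'M[R]_(l * n)) M', M = M'.
    move=> M M'; apply/matrixP => i j; have := ltn_ord i; by rewrite [X in (_ < X)%N]ln0.
  split; first exact: triv.
  move=> x nx; exfalso; apply: (negP nx); apply/eqP/matrixP => i j.
  have := ltn_ord i; by rewrite [X in (_ < X)%N]ln0.
have l0 : l != 0%N by move: ln0; rewrite muln_eq0 negb_or => /andP[].
have n0 : n != 0%N by move: ln0; rewrite muln_eq0 negb_or => /andP[].
have uL : L \in unitmx.
  rewrite unitmxE det_trig // unitfE; apply: lt0r_neq0; apply: prodr_gt0 => i _; exact: diagL.
set K := (1%:M : 'M[R]_l) *t L.
have KT : (1%:M : 'M[R]_l) *t L^T = K^T by rewrite /K trmx_tens trmx1.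
have uK : K \in unitmx by apply: tensmx_unit => //; apply: unitmx1.
set Am := \sum_(k < p) (E k *t A_ k).
have HLA : forall k, L *m A_ k *m L^T = Tk k.
  move=> k; rewrite /A_ !mulmxA mulmxV // mul1mx -mulmxA -trmx_mul mulmxV // trmx1 mulmx1 //.
have HT' : T = K *m (1%:M + Am) *m K^T.
  rewrite HT mulmxDr mulmxDl mulmx1 /K trmx_tens trmx1 tensmx_mul mul1mx -HT0.
  congr (_ + _); rewrite /Am mulmx_sumr mulmx_suml; apply: eq_bigr => k _.
  by rewrite !tensmx_mul mul1mx mulmx1 HLA.
set P := (1%:M : 'M[R]_l) *t (U *m U^T).
have HME : ME E TT = P *m Am *m P.
  rewrite /ME /Am mulmx_sumr mulmx_suml; apply: eq_bigr => k _.
  rewrite /P !tensmx_mul mul1mx mulmx1; congr (_ *t _).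
  rewrite /TT /G !(sq_mode3, sq_mode1) !trmxK.
  have -> : sq X k = A_ k by apply/matrixP => i j; rewrite mxE.
  by rewrite !mulmxA.
rewrite KT HME; apply: core => //.
- have : (K *m (1%:M + Am) *m K^T)^T = K *m (1%:M + Am) *m K^T by rewrite -HT'.
  rewrite !trmx_mul trmxK mulmxA => h.
  have h2 : (1%:M + Am)^T = 1%:M + Am.
    have := congr1 (fun M => invmx K *m M *m invmx K^T) h.
    have uKT : K^T \in unitmx by rewrite unitmx_tr.
    rewrite /= !mulmxA (mulVmx uK) !mul1mx -!mulmxA (mulmxV uKT) !mulmx1 //.
  by move: h2; rewrite raddfD /= trmx1 => /addrI.
- move=> y ny; set x := invmx K^T *m y.
  have Kx : K^T *m x = y by rewrite /x mulKVmx // unitmx_tr.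
  have nx : x != 0.
    by apply/negP => /eqP x0; apply: (negP ny); rewrite -Kx x0 mulmx0.
  have := Tpos x nx; rewrite -/(@qf R _ T x) HT' qfK Kx //.
- by rewrite /P trmx_tens trmx1 trmx_mul trmxK.
- by rewrite /P tensmx_mul mul1mx !mulmxA -(mulmxA U) HU mulmx1.
Qed.
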